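(* Let $\mathfrak{X}$ be a connected complex analytic manifold with base point $z^*$ such that $H=H_1(\mathfrak{X};\mathbb{Z}_2)$ is finite, of order $2^s$, and let $k,q\ge0$. Then $\widehat{\mathcal{F}}^q_k$ coincides with the space of all $q$-forms $\theta\in\mathcal{A}^q(\widetilde{\mathfrak{X}})$ admitting a decomposition $\theta=\sum_{\rho\in H^*}\theta_\rho$ such that $\mathrm{Var}^\rho_\gamma\theta_\rho\in\widehat{\mathcal{F}}^q_{k-1}$ for all $\gamma\in\pi$ and all $\rho\in H^*$. Moreover, if $\theta\in\widehat{\mathcal{F}}^q_k$, one can take $$\theta_\rho=\frac{1}{2^s}\sum_{j=1}^{2^s}(-1)^{\rho(\gamma_j)}M_{\gamma_j}\theta,$$ where $\gamma_1=1,\gamma_2,\dots,\gamma_{2^s}\in\pi$ are representatives of all $2^s$ cosets $\pi/\hat\pi$.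
   Context: $\widetilde{\mathfrak{X}}$ is the universal covering, $\pi=\pi_1(\mathfrak{X},z^* )$ acting by deck transformations $T_\gamma$; $\mathcal{A}^q(\widetilde{\mathfrak{X}})$ is the space of holomorphic $q$-forms on $\widetilde{\mathfrak{X}}$; $M_\gamma\theta=T_\gamma^*\theta$, $\mathrm{Var}_\gamma\theta=M_\gamma\theta-\theta$. $H^*=H^1(\mathfrak{X};\mathbb{Z}_2)=\mathrm{Hom}(\pi,\mathbb{Z}_2)$. For $\rho\in H^*$ the twisted variation is $\mathrm{Var}^\rho_\gamma\theta=M_\gamma\theta-(-1)^{\rho(\gamma)}\theta$. $\hat\pi$ is the kernel of $\pi\to H$, and $\widehat{\mathcal{F}}^q_{-1}=\{0\}$, $\widehat{\mathcal{F}}^q_k=\{\theta:\mathrm{Var}_\gamma\theta\in\widehat{\mathcal{F}}^q_{k-1}\ \forall\gamma\in\hat\pi\}$. *)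

(* Defs.v *)
From HB Require Import structures.
From mathcomp Require Import all_boot all_order all_algebra.
Set Implicit Arguments. Unset Strict Implicit. Unset Printing Implicit Defensive.
Import GRing.Theory.
Local Open Scope ring_scope.

Section Defs.
Variables (G : Type) (mul : G -> G -> G) (one : G) (inv : G -> G).

Record is_group : Prop := IsGroup {
  grp_mulA : forall a b c, mul a (mul b c) = mul (mul a b) c;
  grp_mul1g : forall a, mul one a = a;
  grp_mulg1 : forall a, mul a one = a;
  grp_mulVg : forall a, mul (inv a) a = one;
  grp_mulgV : forall a, mul a (inv a) = one }.

(* pihat = kernel of pi -> H_1(X;Z_2) = subgroup generated by squares and
   commutators *)
Inductive pihat : G -> Prop :=
| pihat_sq a : pihat (mul a a)
| pihat_comm a b : pihat (mul (mul (inv a) (inv b)) (mul a b))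
| pihat_one : pihat one
| pihat_mul a b : pihat a -> pihat b -> pihat (mul a b)
| pihat_inv a : pihat a -> pihat (inv a).

(* elements of H^* = Hom(pi, Z_2), Z_2 = bool with xor *)
Definition is_hom2 (rho : G -> bool) : Prop :=
  forall a b, rho (mul a b) = addb (rho a) (rho b).

Variables (F : fieldType) (V : lmodType F) (M : G -> V -> V).

(* M_gamma = T_gamma^* : linear, M_1 = id, M_{gamma delta} = M_delta o M_gamma
   (pullback is contravariant, T_{gamma delta} = T_gamma o T_delta) *)
Definition is_pullback_rep : Prop :=
  [/\ forall g (a : F) (u v : V), M g (a *: u + v) = a *: M g u + M g v,
      forall u, M one u = u
    & forall a b u, M (mul a b) u = M b (M a u)].

Definition Var (g : G) (th : V) : V := M g th - th.

Definition TVar (rho : G -> bool) (g : G) (th : V) : V :=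
  M g th - ((-1) ^+ rho g) *: th.

(* Fm1 n = \widehat{F}_{n-1}; Fm1 0 = \widehat{F}_{-1} = {0} *)
Fixpoint Fm1 (n : nat) (th : V) : Prop :=
  match n with
  | 0 => th = 0
  | n'.+1 => forall g, pihat g -> Fm1 n' (Var g th)
  end.

Definition Fhat (k : nat) (th : V) : Prop := Fm1 k.+1 th.

End Defs.

(* Main.v *)
Require Import Defs.
From HB Require Import structures.
From mathcomp Require Import all_boot all_order all_algebra.
From Stdlib Require Import ClassicalEpsilon Classical.
Import GRing.Theory.
Local Open Scope ring_scope.

Lemma sep_fin (Q : finType) (op : Q -> Q -> Q) (z : Q)
  (opA : forall a b c, op a (op b c) = op (op a b) c)
  (opC : forall a b, op a b = op b a) (op0 : forall a, op z a = a)
  (opK : forall a, op a a = z) (x : Q) :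
  x != z -> exists f : Q -> bool,
    (forall a b, f (op a b) = f a (+) f b) /\ f x = true.
Proof.
move=> xz.
have hh u t t' : op (op u t) (op u t') = op t t'.
  by rewrite (opC u t) -opA (opA u) opK (opC t) -opA op0.
have hr u t : op (op u t) t = u by rewrite -opA opK opC op0.
pose P := fun S : {set Q} => [&& z \in S,
  [forall a, forall b, (a \in S) ==> (b \in S) ==> (op a b \in S)] & x \notin S].
have P0 : P [set z].
  rewrite /P set11 /= in_set1 xz andbT.
  apply/forallP=> a; apply/forallP=> b; rewrite !in_set1.
  by apply/implyP=> /eqP->; apply/implyP=> /eqP->; rewrite op0 eqxx.
case: (@arg_maxnP _ [set z] P (fun S => #|S|) P0) => S /and3P[zS /forallP clS xS] maxS.
have cl a b : a \in S -> b \in S -> op a b \in S.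
  by move=> aS bS; move: (clS a) => /forallP/(_ b); rewrite aS bS.
have key y : y \notin S -> exists2 t, t \in S & y = op x t.
  move=> yS; pose S' := S :|: [set op y t | t in S].
  case xS': (x \in S').
    move: xS'; rewrite in_setU (negbTE xS) /= => /imsetP[t tS ->].
    by exists t => //; rewrite hr.
  exfalso.
  have PS' : P S'.
    rewrite /P xS' andbT in_setU zS /=.
    apply/forallP=> a; apply/forallP=> b; apply/implyP=> aS'; apply/implyP=> bS'.
    move: aS' bS'; rewrite !in_setU => /orP[aS|/imsetP[t tS ->]] /orP[bS|/imsetP[t' t'S ->]].
    - by rewrite cl.
    - apply/orP; right; apply/imsetP; exists (op a t'); first exact: cl.
      by rewrite opA (opC a y) -opA.
    - apply/orP; right; apply/imsetP; exists (op t b); first exact: cl.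
      by rewrite opA.
    - by rewrite hh cl.
  have le := maxS S' PS'.
  have : S \proper S'.
    apply/properP; split; first exact: subsetUl.
    exists y => //; rewrite in_setU; apply/orP; right; apply/imsetP.
    by exists z => //; rewrite opC op0.
  move=> /proper_card lt; move: le; rewrite /= leqNgt lt.
  done.
exists (fun a => a \notin S); split; last by [].
move=> a b.
case aS: (a \in S); case bS: (b \in S) => /=.
- by rewrite cl.
- have [t tS ->] := key b (negbT bS).
  apply/negP=> H; move: xS; rewrite -(hr x (op a t)).
  by rewrite opA (opC a x) -opA in H; rewrite (cl _ _ H) // cl.
- have [t tS ->] := key a (negbT aS).
  apply/negP=> H; move: xS; rewrite -(hr x (op t b)).
  by rewrite -opA in H; rewrite (cl _ _ H) // cl.
- have [t tS ->] := key a (negbT aS).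
  have [t' t'S ->] := key b (negbT bS).
  by rewrite hh cl.
Qed.
Section Grp.
Variables (G : Type) (mul : G -> G -> G) (one : G) (inv : G -> G).
Hypothesis HG : is_group mul one inv.
Local Notation ph := (pihat mul one inv).

Let mulA a b c : mul a (mul b c) = mul (mul a b) c. Proof. by case: HG. Qed.
Let mul1g a : mul one a = a. Proof. by case: HG. Qed.
Let mulg1 a : mul a one = a. Proof. by case: HG. Qed.
Let mulVg a : mul (inv a) a = one. Proof. by case: HG. Qed.
Let mulgV a : mul a (inv a) = one. Proof. by case: HG. Qed.

Lemma g_mulKg a b : mul (inv a) (mul a b) = b. Proof. by rewrite mulA mulVg mul1g. Qed.
Lemma g_mulKVg a b : mul a (mul (inv a) b) = b. Proof. by rewrite mulA mulgV mul1g. Qed.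
Lemma g_mulgK a b : mul (mul b a) (inv a) = b. Proof. by rewrite -mulA mulgV mulg1. Qed.
Lemma g_mulgKV a b : mul (mul b (inv a)) a = b. Proof. by rewrite -mulA mulVg mulg1. Qed.
Lemma g_invK a : inv (inv a) = a.
Proof. by rewrite -[inv (inv a)]mulg1 -(mulVg a) mulA mulVg mul1g. Qed.
Lemma g_invM a b : inv (mul a b) = mul (inv b) (inv a).
Proof.
have e : mul (mul a b) (mul (inv b) (inv a)) = one.
  by rewrite -mulA g_mulKVg mulgV.
by rewrite -[inv (mul a b)]mulg1 -e g_mulKg.
Qed.
Lemma g_inv1 : inv one = one. Proof. by rewrite -[inv one]mulg1 mulVg. Qed.

Lemma ph_conj x c : ph x -> ph (mul (mul c x) (inv c)).
Proof.
move=> px.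
have -> : mul (mul c x) (inv c) = mul x (mul (mul (inv x) (inv (inv c))) (mul x (inv c))).
  by rewrite g_invK mulA g_mulKVg mulA.
by apply: pihat_mul => //; apply: pihat_comm.
Qed.

Lemma ph_comm a b : ph (mul (mul a b) (inv (mul b a))).
Proof.
have -> : mul (mul a b) (inv (mul b a)) =
   mul (mul (inv (inv a)) (inv (inv b))) (mul (inv a) (inv b)).
  by rewrite !g_invK g_invM.
exact: pihat_comm.
Qed.

Lemma hom_one (rho : G -> bool) : is_hom2 mul rho -> rho one = false.
Proof. by move=> h; have := h one one; rewrite mulg1 addbb. Qed.
Lemma hom_inv (rho : G -> bool) a : is_hom2 mul rho -> rho (inv a) = rho a.
Proof.
move=> h; have := h a (inv a); rewrite mulgV hom_one //.
by case: (rho a); case: (rho (inv a)).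
Qed.
Lemma hom_ph (rho : G -> bool) x : is_hom2 mul rho -> ph x -> rho x = false.
Proof.
move=> h; elim=> {x}.
- by move=> a; rewrite h addbb.
- by move=> a b; rewrite !h !hom_inv //; case: (rho a); case: (rho b).
- exact: hom_one.
- by move=> a b _ Ha _ Hb; rewrite h Ha Hb.
- by move=> a _ IH; rewrite hom_inv.
Qed.

Variables (N : nat) (gam : 'I_N -> G)
  (gam_cosets : forall g : G, exists! j : 'I_N, ph (mul g (inv (gam j)))).

Definition idx (g : G) : 'I_N :=
  proj1_sig (constructive_indefinite_description _ (gam_cosets g)).
Lemma idxP g : ph (mul g (inv (gam (idx g)))).
Proof. rewrite /idx; case: constructive_indefinite_description => j [] //. Qed.
Lemma idxU g j : ph (mul g (inv (gam j))) -> idx g = j.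
Proof. rewrite /idx; case: constructive_indefinite_description => j' [] /= _; apply. Qed.
Lemma idx_gam j : idx (gam j) = j.
Proof. by apply: idxU; rewrite mulgV; apply: pihat_one. Qed.
Lemma idx_eq a b : ph (mul a (inv b)) -> idx a = idx b.
Proof.
move=> h; apply: idxU.
have -> : mul a (inv (gam (idx b))) = mul (mul a (inv b)) (mul b (inv (gam (idx b)))).
  by rewrite mulA g_mulgKV.
by apply: pihat_mul => //; apply: idxP.
Qed.
Lemma idx_eqP a b : idx a = idx b -> ph (mul a (inv b)).
Proof.
move=> e.
have -> : mul a (inv b) = mul (mul a (inv (gam (idx a)))) (inv (mul b (inv (gam (idx b))))).
  by rewrite e g_invM g_invK mulA g_mulgKV.
by apply: pihat_mul; [apply: idxP | apply: pihat_inv; apply: idxP].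
Qed.
Lemma idx_mul a b : idx (mul a b) = idx (mul (gam (idx a)) (gam (idx b))).
Proof.
apply: idx_eq.
set x := mul a (inv (gam (idx a))); set y := mul b (inv (gam (idx b))).
have -> : mul (mul a b) (inv (mul (gam (idx a)) (gam (idx b)))) =
          mul (mul (mul a y) (inv a)) x.
  rewrite /x /y -(mulA _ (inv a)) g_mulKg g_invM.
  by rewrite !mulA.
by apply: pihat_mul; [apply: ph_conj; apply: idxP | apply: idxP].
Qed.

Definition opQ (i j : 'I_N) := idx (mul (gam i) (gam j)).
Lemma idx_hom a b : idx (mul a b) = opQ (idx a) (idx b).
Proof. exact: idx_mul. Qed.
Lemma opQA a b c : opQ a (opQ b c) = opQ (opQ a b) c.
Proof.
have e1 : opQ a (opQ b c) = idx (mul (gam a) (mul (gam b) (gam c))).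
  by rewrite idx_hom idx_gam.
have e2 : opQ (opQ a b) c = idx (mul (mul (gam a) (gam b)) (gam c)).
  by rewrite idx_hom idx_gam.
by rewrite e1 e2 mulA.
Qed.
Lemma opQC a b : opQ a b = opQ b a.
Proof. by apply: idx_eq; apply: ph_comm. Qed.
Lemma opQ0 a : opQ (idx one) a = a.
Proof. by rewrite -{1}(idx_gam a) -idx_hom mul1g idx_gam. Qed.
Lemma opQK a : opQ a a = idx one.
Proof. by apply: idx_eq; rewrite g_inv1 mulg1; apply: pihat_sq. Qed.

Lemma separate a : ~ ph a -> exists rho : G -> bool, is_hom2 mul rho /\ rho a = true.
Proof.
move=> na.
have xz : idx a != idx one.
  by apply/eqP=> /idx_eqP; rewrite g_inv1 mulg1.
have [f [fh fx]] := @sep_fin _ _ _ opQA opQC opQ0 opQK _ xz.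
by exists (fun g => f (idx g)); split => // u v; rewrite idx_hom fh.
Qed.


Variables (F : fieldType) (V : lmodType F) (M : G -> V -> V).
Hypothesis HM : is_pullback_rep mul one M.

Let Mlin g (a : F) (u v : V) : M g (a *: u + v) = a *: M g u + M g v.
Proof. by case: HM. Qed.
Let M1 u : M one u = u. Proof. by case: HM. Qed.
Let Mmul a b u : M (mul a b) u = M b (M a u). Proof. by case: HM. Qed.
Let M0 g : M g 0 = 0.
Proof. by have := Mlin g 1 0 0; rewrite !scale1r addr0 => /esym/eqP; rewrite -subr_eq0 addrK => /eqP. Qed.
Let MD g u v : M g (u + v) = M g u + M g v.
Proof. by have := Mlin g 1 u v; rewrite !scale1r. Qed.
Let MZ g a u : M g (a *: u) = a *: M g u.
Proof. by rewrite -[a *: u]addr0 Mlin M0 addr0. Qed.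
Let MN g u : M g (- u) = - M g u.
Proof. by rewrite -scaleN1r MZ scaleN1r. Qed.
Let MB g u v : M g (u - v) = M g u - M g v.
Proof. by rewrite MD MN. Qed.
Let Msum g (I : finType) (f : I -> V) : M g (\sum_i f i) = \sum_i M g (f i).
Proof. exact: (big_morph (M g) (MD g) (M0 g)). Qed.

Local Notation W := (Fm1 mul one inv M).

Lemma W0 m : W m 0.
Proof. by elim: m => [|m IH] //= g _; rewrite /Var M0 subr0. Qed.
Lemma WD m u v : W m u -> W m v -> W m (u + v).
Proof.
elim: m u v => [|m IH] u v /=; first by move=> -> ->; rewrite addr0.
move=> Hu Hv g pg; rewrite /Var MD opprD addrACA.
by apply: IH; [apply: Hu | apply: Hv].
Qed.
Lemma WZ m a u : W m u -> W m (a *: u).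
Proof.
elim: m u => [|m IH] u /=; first by move=> ->; rewrite scaler0.
by move=> Hu g pg; rewrite /Var MZ -scalerBr; apply: IH; apply: Hu.
Qed.
Lemma Wsum m (I : finType) (f : I -> V) : (forall i, W m (f i)) -> W m (\sum_i f i).
Proof.
move=> H; apply: (big_ind (W m)); [exact: W0 | exact: WD | by move=> i _].
Qed.
Lemma WM m c u : W m u -> W m (M c u).
Proof.
elim: m c u => [|m IH] c u /=; first by move=> ->; rewrite M0.
move=> Hu g pg.
have -> : Var M g (M c u) = M c (Var M (mul (mul c g) (inv c)) u).
  by rewrite /Var MB -!Mmul g_mulgKV.
by apply: IH; apply: Hu; apply: ph_conj.
Qed.

Lemma rho_idx (rho : G -> bool) a : is_hom2 mul rho -> rho (gam (idx a)) = rho a.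
Proof.
move=> h; have := @hom_ph _ _ h (idxP a); rewrite h hom_inv //.
by case: (rho a); case: (rho (gam (idx a))).
Qed.

Lemma sig_right g : injective (fun j => idx (mul (gam j) g)).
Proof.
move=> j j' /= /idx_eqP; rewrite g_invM -mulA g_mulKVg => /idx_eq.
by rewrite !idx_gam.
Qed.

Hypothesis two_neq0 : (2%:R : F) != 0.

Lemma sum_zero (I : finType) (f : I -> bool) (t : I -> I) :
  injective t -> (forall i, f (t i) = ~~ f i) ->
  \sum_i ((-1) ^+ f i : F) = 0.
Proof.
move=> ti ft.
have e : \sum_i ((-1) ^+ f i : F) = - \sum_i ((-1) ^+ f i : F).
  rewrite {1}(reindex_inj ti) -sumrN; apply: eq_bigr => i _.
  by rewrite ft; case: (f i); rewrite /= ?opprK ?expr0 ?expr1.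
apply/eqP; move/eqP: e; rewrite -subr_eq0 opprK -mulr2n -mulr_natl mulf_eq0.
by rewrite (negbTE two_neq0).
Qed.

Variables (n : nat) (E : 'I_n -> G -> bool)
  (E_hom : forall i, is_hom2 mul (E i))
  (E_enum : forall rho : G -> bool, is_hom2 mul rho ->
      exists! i : 'I_n, forall g, E i g = rho g).
Variables (j0 : 'I_N).
Hypothesis gam_j0 : gam j0 = one.

Lemma char_hom_sum i : (exists h, E i h = true) ->
  \sum_(j < N) ((-1) ^+ E i (gam j) : F) = 0.
Proof.
move=> [h Eh]; apply: (@sum_zero _ _ _ (sig_right h)) => j /=.
by rewrite rho_idx // E_hom Eh addbT.
Qed.

Lemma char_grp_sum j : j != j0 -> \sum_(i < n) ((-1) ^+ E i (gam j) : F) = 0.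
Proof.
move=> jj0.
have nph : ~ ph (gam j).
  move=> pj; move/eqP: jj0; apply; rewrite -(idx_gam j); apply: idxU.
  by rewrite gam_j0 g_inv1 mulg1.
have [rho [hr rj]] := separate _ nph.
have tau : forall i, {i' | forall g, E i' g = E i g (+) rho g}.
  move=> i; apply: constructive_indefinite_description.
  have hx : is_hom2 mul (fun g => E i g (+) rho g).
    by move=> a b; rewrite E_hom hr; case: (E i a); case: (E i b); case: (rho a); case: (rho b).
  by have [i' [Hi' _]] := E_enum _ hx; exists i'.
pose t i := sval (tau i).
have tinj : injective t.
  move=> i i' e.
  have [i2 [_ U]] := E_enum _ (E_hom i).
  rewrite -(U i) // -(U i') // => g.
  have := svalP (tau i) g; have := svalP (tau i') g; rewrite -/(t i) -/(t i') e => ->.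
  by move/addIb.
apply: (@sum_zero _ _ _ tinj) => i.
by rewrite (svalP (tau i)) rj addbT.
Qed.

Lemma n_eq : (n%:R : F) = N%:R.
Proof.
have e : \sum_(j < N) \sum_(i < n) ((-1) ^+ E i (gam j) : F) =
           \sum_(i < n) \sum_(j < N) ((-1) ^+ E i (gam j) : F).
  exact: exchange_big.
rewrite (bigD1 j0) //= [X in _ + X = _]big1 in e; last first.
  by move=> j jj; apply: char_grp_sum.
rewrite addr0 gam_j0 in e.
have [it [Hit Uit]] := E_enum (fun _ => false) (fun a b => erefl).
rewrite [X in _ = X](bigD1 it) //= [X in _ = _ + X]big1 in e; last first.
  move=> i ii; apply: char_hom_sum.
  apply: NNPP => nh; move/eqP: ii; apply; apply: esym; apply: Uit => g.
  by case E': (E i g) => //; exfalso; apply: nh; exists g.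
rewrite addr0 in e.
have -> : n%:R = \sum_(i < n) ((-1) ^+ E i one : F).
  rewrite (eq_bigr (fun _ => 1)); last by move=> i _; rewrite (@hom_one _ (E_hom i)).
  by rewrite sumr_const card_ord.
rewrite e (eq_bigr (fun _ => 1)); last by move=> i _; rewrite Hit.
by rewrite sumr_const card_ord.
Qed.


Hypothesis N_neq0 : (N%:R : F) != 0.

Lemma part2 k th : W k.+1 th ->
  let ths := fun i : 'I_n => ((N%:R : F)^-1) *:
       \sum_(j < N) (((-1) ^+ E i (gam j)) *: M (gam j) th) in
  th = \sum_(i < n) ths i /\ forall (i : 'I_n) (g : G), W k (TVar M (E i) g (ths i)).
Proof.
move=> HW ths; split.
  rewrite /ths -scaler_sumr exchange_big /=.
  under eq_bigr do rewrite -scaler_suml.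
  rewrite (bigD1 j0) //= [X in _ + X]big1 ?addr0; last first.
    by move=> j jj; rewrite char_grp_sum // scale0r.
  rewrite gam_j0 M1 (eq_bigr (fun _ => 1)); last by move=> i _; rewrite (@hom_one _ (E_hom i)).
  by rewrite sumr_const card_ord n_eq scalerA mulVf // scale1r.
move=> i g.
pose sg j := idx (mul (gam j) g).
pose h j := mul (mul (gam j) g) (inv (gam (sg j))).
have eE j : (-1) ^+ E i g * (-1) ^+ E i (gam (sg j)) = (-1) ^+ E i (gam j) :> F.
  by rewrite -signr_addb /sg (rho_idx _ _ (E_hom i)) E_hom addbC addbK.
have eMM j : M g (M (gam j) th) = M (gam (sg j)) (Var M (h j) th) + M (gam (sg j)) th.
  by rewrite /Var MB subrK -!Mmul /h g_mulgKV.
have eM j : M g ((-1) ^+ E i (gam j) *: M (gam j) th) =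
   (-1) ^+ E i (gam j) *: M (gam (sg j)) (Var M (h j) th) +
   (-1) ^+ E i g *: ((-1) ^+ E i (gam (sg j)) *: M (gam (sg j)) th).
  by rewrite MZ eMM scalerDr; congr (_ + _); rewrite scalerA eE.
have eR : \sum_(j < N) (-1) ^+ E i (gam (sg j)) *: M (gam (sg j)) th =
          \sum_(j < N) (-1) ^+ E i (gam j) *: M (gam j) th.
  by rewrite [RHS](reindex_inj (sig_right g)).
have -> : TVar M (E i) g (ths i) = (N%:R)^-1 *: \sum_(j < N)
     (-1) ^+ E i (gam j) *: M (gam (sg j)) (Var M (h j) th).
  rewrite /TVar /ths MZ Msum.
  under eq_bigr => j _ do rewrite eM.
  rewrite big_split /= -scaler_sumr eR.
  by rewrite scalerDr scalerA [_^-1 * _]mulrC -scalerA addrK.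
apply: WZ; apply: Wsum => j; apply: WZ; apply: WM; apply: HW; exact: idxP.
Qed.

Lemma part1r k th (ths : 'I_n -> V) : th = \sum_(i < n) ths i ->
  (forall (i : 'I_n) (g : G), W k (TVar M (E i) g (ths i))) -> W k.+1 th.
Proof.
move=> -> H h ph_h.
rewrite /Var Msum -sumrB; apply: Wsum => i.
by have := H i h; rewrite /TVar (@hom_ph _ _ (E_hom i) ph_h) expr0 scale1r.
Qed.

End Grp.

Theorem lemma3
  (F : fieldType) (two_neq0 : (2%:R : F) != 0) (V : lmodType F)
  (G : Type) (mul : G -> G -> G) (one : G) (inv : G -> G)
  (HG : is_group mul one inv)
  (M : G -> V -> V) (HM : is_pullback_rep mul one M)
  (s : nat) (gam : 'I_(2 ^ s) -> G)
  (gam1 : forall j : 'I_(2 ^ s), nat_of_ord j = 0%N -> gam j = one)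
  (gam_cosets : forall g : G,
      exists! j : 'I_(2 ^ s), pihat mul one inv (mul g (inv (gam j))))
  (n : nat) (E : 'I_n -> G -> bool)
  (E_hom : forall i, is_hom2 mul (E i))
  (E_enum : forall rho : G -> bool, is_hom2 mul rho ->
      exists! i : 'I_n, forall g, E i g = rho g)
  (k : nat) :
  (forall th : V,
     Fhat mul one inv M k th <->
     exists ths : 'I_n -> V,
       th = \sum_(i < n) ths i /\
       forall (i : 'I_n) (g : G), Fm1 mul one inv M k (TVar M (E i) g (ths i)))
  /\
  (forall th : V, Fhat mul one inv M k th ->
     let ths := fun i : 'I_n =>
       ((2 ^ s)%:R : F)^-1 *:
         \sum_(j < 2 ^ s) (((-1) ^+ E i (gam j)) *: M (gam j) th) in
     th = \sum_(i < n) ths i /\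
     forall (i : 'I_n) (g : G), Fm1 mul one inv M k (TVar M (E i) g (ths i))).
Proof.
have P0 : (0 < 2 ^ s)%N by rewrite expn_gt0.
pose j0 : 'I_(2 ^ s) := Ordinal P0.
have gj0 : gam j0 = one by apply: gam1.
have Nn0 : ((2 ^ s)%:R : F) != 0 by rewrite natrX expf_neq0.
have P2 := @part2 G mul one inv HG (2 ^ s) gam gam_cosets F V M HM two_neq0 n E E_hom E_enum j0 gj0 Nn0.
split.
  move=> th; split.
    move=> H; move: (P2 k th H) => /= [e1 e2].
    by eexists; split; [exact: e1 | exact: e2].
  move=> [ths [e H]]; exact: (@part1r G mul one inv HG F V M HM n E E_hom k th ths e H).
by move=> th H; exact: (P2 k th H).
Qed.
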